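(* Let $L\ge1$, $\alpha\in(\alpha_{L+1},\alpha_L)$ and $K\in\{0,1,\dots,L+1\}$. Then the system $(E_K)$ together with the extra condition $l_{K+2}=0$ has a unique solution $(l_0,\dots,l_{K+2})$, given by $$l_j=\frac{\sin\big(\frac{K+2-j}{2}\omega\big)\sin\big(\frac{j\omega}{2}\big)}{Z},\quad j\in\{0,\dots,K+2\},\qquad Z:=\sum_{i=1}^{K+1}\sin\big(\tfrac{K+2-i}{2}\omega\big)\sin\big(\tfrac{i\omega}{2}\big),$$ and it satisfies $$d_0=-d_{K+1}=-\alpha\,\frac{\sin\big(\frac{K+3}{2}\omega\big)\sin\big(\frac{\omega}{2}\big)}{Z}.$$ Moreover $l_1,\dots,l_{K+1}>0$, and $d_0<0$ if $K\in\{0,\dots,L-1\}$, while $d_0>0$ if $K\in\{L,L+1\}$. Finally, the two displayed formulas also hold when $\alpha=\alpha_L$ and $K\in\{1,\dots,L-1\}$.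
   Context: Define $\alpha_1:=+\infty$ and, for $L\ge2$, $\alpha_L:=\dfrac{1}{1+2\cos(\frac{2\pi}{L+2})}$. For $\alpha>1/3$, let $\omega\in(0,\pi)$ be the unique real with $\cos\omega=\frac{1-\alpha}{2\alpha}$ (so $\alpha\in(\alpha_{L+1},\alpha_L)$ iff $\frac{2\pi}{L+3}<\omega<\frac{2\pi}{L+2}$). For an integer $K\ge0$ and a real vector $(l_0,\dots,l_{K+2})$, set $d_0:=l_0-l_1+\alpha l_2$, $d_j:=-\alpha l_{j-1}+l_j-l_{j+1}+\alpha l_{j+2}$ for $j\in\{1,\dots,K\}$, and $d_{K+1}:=-\alpha l_K+l_{K+1}-l_{K+2}$. The system $(E_K)$ is: $d_1=\dots=d_K=0$, $l_0=0$, and $\sum_{j=1}^{K+1}l_j=1$. *)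

(* Defs.v *)
From Stdlib Require Import Reals Lra Lia.
Open Scope R_scope.

(* alpha_L := 1 / (1 + 2 cos(2 pi / (L+2))), meaningful for L >= 2
   (alpha_1 = +infinity is handled in [alpha_band]). *)
Definition alphaL (L : nat) : R := 1 / (1 + 2 * cos (2 * PI / INR (L + 2))).

(* alpha in the open interval (alpha_{L+1}, alpha_L), with alpha_1 = +oo. *)
Definition alpha_band (L : nat) (a : R) : Prop :=
  alphaL (S L) < a /\ ((2 <= L)%nat -> a < alphaL L).

Definition dcoef (a : R) (K : nat) (l : nat -> R) (j : nat) : R :=
  if Nat.eqb j 0 then l 0%nat - l 1%nat + a * l 2%nat
  else if Nat.eqb j (S K) then - a * l K + l (S K) - l (S (S K))
  else - a * l (j - 1)%nat + l j - l (S j) + a * l (S (S j)).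

(* The system (E_K) together with l_{K+2} = 0;
   sum_{j=1}^{K+1} l_j = sum_f_R0 (fun i => l (i+1)) K. *)
Definition system_EK0 (a : R) (K : nat) (l : nat -> R) : Prop :=
  (forall j : nat, (1 <= j <= K)%nat -> dcoef a K l j = 0) /\
  l 0%nat = 0 /\
  sum_f_R0 (fun i => l (S i)) K = 1 /\
  l (K + 2)%nat = 0.

Definition Zc (w : R) (K : nat) : R :=
  sum_f_R0 (fun i => sin ((INR (K + 2) - INR (S i)) / 2 * w) * sin (INR (S i) * w / 2)) K.

Definition lsol (w : R) (K : nat) (j : nat) : R :=
  sin ((INR (K + 2) - INR j) / 2 * w) * sin (INR j * w / 2) / Zc w K.

(* Main.v *)
Require Import Defs.
From Stdlib Require Import Reals Lra Lia.
Open Scope R_scope.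

Definition s0 (w : R) (K j : nat) : R :=
  sin ((INR (K + 2) - INR j) / 2 * w) * sin (INR j * w / 2).

Definition Fh (w : R) (j : nat) : R := cos (w/2) - cos (w/2 - INR j * w).

Definition rec (a : R) (p : nat -> R) (j : nat) : R :=
  - a * p (j - 1)%nat + p j - p (S j) + a * p (S (S j)).

Lemma prod_sin u v : 2 * (sin u * sin v) = cos (u - v) - cos (u + v).
Proof. rewrite cos_minus, cos_plus. ring. Qed.

Lemma cosrec (phi w a x : R) : 1 - a - 2 * a * cos w = 0 ->
  - a * cos (phi - (x - 1) * w) + cos (phi - x * w) - cos (phi - (x + 1) * w)
  + a * cos (phi - (x + 2) * w) = 0.
Proof.
intro H. set (p := phi - x * w).
replace (phi - (x - 1) * w) with (p + w) by (unfold p; ring).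
replace (phi - (x + 1) * w) with (p - w) by (unfold p; ring).
replace (phi - (x + 2) * w) with ((p - w) - w) by (unfold p; ring).
rewrite cos_minus, cos_plus, !cos_minus, sin_minus.
pose proof (sin2_cos2 w) as Hs. unfold Rsqr in Hs.
assert (S' : 1 - sin w * sin w - cos w * cos w = 0) by lra.
transitivity ((1 - a - 2*a*cos w)*(cos p*(1 - cos w) - sin p * sin w)
   + a * cos p * (1 - sin w * sin w - cos w * cos w)).
ring. rewrite H, S'. ring.
Qed.

Lemma s0_cos w K j : s0 w K j =
  (cos (INR (K+2) * w / 2 - INR j * w) - cos (INR (K+2) * w / 2)) / 2.
Proof. unfold s0.
 set (u := (INR (K + 2) - INR j) / 2 * w). set (v := INR j * w / 2).
 replace (INR (K+2) * w / 2 - INR j * w) with (u - v) by (unfold u, v; field).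
 replace (INR (K+2) * w / 2) with (u + v) by (unfold u,v; field).
 rewrite <- prod_sin. field.
Qed.

Lemma s0_rec a w K j : 1 - a - 2*a*cos w = 0 -> (1 <= j)%nat -> rec a (s0 w K) j = 0.
Proof. intros H Hj. unfold rec. rewrite !s0_cos.
 rewrite (minus_INR j 1) by lia. change (INR 1) with 1. rewrite !S_INR.
 pose proof (cosrec (INR (K+2) * w / 2) w a (INR j) H) as R.
 replace (INR j + 1 + 1) with (INR j + 2) by ring.
 lra.
Qed.

Lemma F_rec a w j : 1 - a - 2*a*cos w = 0 -> (1 <= j)%nat -> rec a (Fh w) j = 0.
Proof. intros H Hj. unfold rec, Fh.
 rewrite (minus_INR j 1) by lia. change (INR 1) with 1. rewrite !S_INR.
 pose proof (cosrec (w / 2) w a (INR j) H) as R.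
 replace (INR j + 1 + 1) with (INR j + 2) by ring.
 lra.
Qed.

Lemma rec_lin a p q t c j : rec a (fun i => t * p i + c * q i) j = t * rec a p j + c * rec a q j.
Proof. unfold rec. ring. Qed.

Lemma uniq3 (a:R) (K:nat) (p q: nat -> R) : a <> 0 ->
 (forall j, (1 <= j <= K)%nat -> rec a p j = 0) ->
 (forall j, (1 <= j <= K)%nat -> rec a q j = 0) ->
 p 0%nat = q 0%nat -> p 1%nat = q 1%nat -> p 2%nat = q 2%nat ->
 forall j, (j <= K+2)%nat -> p j = q j.
Proof.
intros Ha Hp Hq H0 H1 H2.
assert (forall n j, (j <= n)%nat -> (j <= K+2)%nat -> p j = q j).
{ induction n; intros j Hj HjK.
  - replace j with 0%nat by lia; auto.
  - destruct (Compare_dec.le_lt_dec j n) as [h|h]. apply IHn; lia.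
    assert (j = S n) by lia. subst j.
    destruct n as [|[|n]]. auto. auto.
    pose proof (Hp (S n) ltac:(lia)) as E1. pose proof (Hq (S n) ltac:(lia)) as E2.
    unfold rec in E1, E2.
    replace (S n - 1)%nat with n in E1, E2 by lia.
    rewrite (IHn n), (IHn (S n)), (IHn (S (S n))) in E1 by lia.
    apply (Rmult_eq_reg_l a); [lra|auto]. }
intros j Hj. apply (H j j); lia.
Qed.

Lemma dcoef_mid a K l j : (1 <= j <= K)%nat -> dcoef a K l j = rec a l j.
Proof. intro H. unfold dcoef, rec.
 destruct (Nat.eqb_spec j 0); [lia|]. destruct (Nat.eqb_spec j (S K)); [lia|]. reflexivity.
Qed.

Lemma dcoef_SK a K l : dcoef a K l (S K) = - a * l K + l (S K) - l (S (S K)).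
Proof. unfold dcoef. simpl. rewrite Nat.eqb_refl. reflexivity. Qed.

Lemma sum_pos (f : nat -> R) n : (forall i, (i <= n)%nat -> 0 < f i) -> 0 < sum_f_R0 f n.
Proof. induction n; intro H; simpl. apply H; lia.
 assert (0 < sum_f_R0 f n) by (apply IHn; intros; apply H; lia).
 assert (0 < f (S n)) by (apply H; lia). lra. Qed.

Lemma s0_0 w K : s0 w K 0 = 0.
Proof. unfold s0. replace (INR 0 * w / 2) with 0 by (simpl; field). rewrite sin_0. ring. Qed.

Lemma s0_K2 w K : s0 w K (K+2) = 0.
Proof. unfold s0. replace ((INR (K+2) - INR (K+2)) / 2 * w) with 0 by field. rewrite sin_0. ring. Qed.

Lemma s0_sym w K j : (j <= K+2)%nat -> s0 w K (K+2-j) = s0 w K j.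
Proof. intro H. unfold s0. rewrite minus_INR by lia.
 replace ((INR (K+2) - (INR (K+2) - INR j)) / 2 * w) with (INR j * w / 2) by field.
 replace ((INR (K+2) - INR j) * w / 2) with ((INR (K+2) - INR j) / 2 * w) by field.
 ring. Qed.

Lemma Fh0 w : Fh w 0 = 0.
Proof. unfold Fh. simpl INR. replace (w/2 - 0*w) with (w/2) by ring. ring. Qed.

Lemma Fh1 w : Fh w 1 = 0.
Proof. unfold Fh. change (INR 1) with 1. replace (w/2 - 1*w) with (-(w/2)) by field.
 rewrite cos_neg. ring. Qed.

Lemma Fh_eq w m : Fh w (S m) = 2 * (sin (INR (S m) * w / 2) * sin (INR m * w / 2)).
Proof. unfold Fh. rewrite prod_sin. rewrite S_INR.
 replace (w / 2 - (INR m + 1) * w) with (- ((INR m + 1) * w / 2 + INR m * w / 2)) by field.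
 rewrite cos_neg. f_equal. f_equal. field. Qed.

Lemma s0_pos w K j : 0 < w -> INR (K + 1) * w < 2 * PI -> (1 <= j <= K+1)%nat -> 0 < s0 w K j.
Proof. intros Hw HK Hj. unfold s0.
 assert (1 <= INR j) by (apply (le_INR 1); lia).
 assert (INR j <= INR (K+1)) by (apply le_INR; lia).
 replace (INR (K+2)) with (INR (K+1) + 1) in * by (rewrite !plus_INR; simpl; ring).
 apply Rmult_lt_0_compat; apply sin_gt_0; nra.
Qed.

Lemma core (K : nat) (a w : R) :
  0 < a -> cos w = (1 - a) / (2 * a) -> 0 < w < PI ->
  INR (K + 1) * w < 2 * PI -> sin (INR (K + 2) * w / 2) <> 0 ->
  system_EK0 a K (lsol w K) /\
  (forall l : nat -> R, system_EK0 a K l ->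
     forall j : nat, (j <= K + 2)%nat -> l j = lsol w K j) /\
  dcoef a K (lsol w K) 0 = - dcoef a K (lsol w K) (S K) /\
  dcoef a K (lsol w K) 0 =
    - a * (sin (INR (K + 3) / 2 * w) * sin (w / 2)) / Zc w K /\
  (forall j : nat, (1 <= j <= K + 1)%nat -> 0 < lsol w K j) /\
  0 < Zc w K.
Proof.
intros Ha Hc Hw HK Hne.
assert (Hrel : 1 - a - 2 * a * cos w = 0) by (rewrite Hc; field; lra).
assert (HZe : Zc w K = sum_f_R0 (fun i => s0 w K (S i)) K) by reflexivity.
assert (HL : forall j, lsol w K j = s0 w K j / Zc w K) by reflexivity.
assert (HZ : 0 < Zc w K).
{ rewrite HZe. apply sum_pos. intros i Hi. apply s0_pos; lra || lia. }
assert (Hsym2 : s0 w K K = s0 w K 2).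
{ rewrite <- (s0_sym w K 2) by lia. f_equal. lia. }
assert (Hsym1 : s0 w K (S K) = s0 w K 1).
{ rewrite <- (s0_sym w K 1) by lia. f_equal. lia. }
assert (HK2 : s0 w K (S (S K)) = 0).
{ replace (S (S K)) with (K+2)%nat by lia. apply s0_K2. }
assert (Hd0 : dcoef a K (lsol w K) 0 = (- s0 w K 1 + a * s0 w K 2) / Zc w K).
{ unfold dcoef. simpl. rewrite !HL, s0_0. field. lra. }
split; [|split; [|split; [|split; [|split]]]].
-
  split; [|split; [|split]].
  + intros j Hj. rewrite dcoef_mid by lia. unfold rec. rewrite !HL.
    pose proof (s0_rec a w K j Hrel ltac:(lia)) as R. unfold rec in R.
    transitivity ((- a * s0 w K (j - 1) + s0 w K j - s0 w K (S j) + a * s0 w K (S (S j))) / Zc w K).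
    field; lra. rewrite R. field; lra.
  + rewrite HL, s0_0. field; lra.
  + transitivity (/ Zc w K * sum_f_R0 (fun i => s0 w K (S i)) K);
      [| rewrite <- HZe; field; lra].
    rewrite scal_sum. apply sum_eq. intros i Hi.
    rewrite HL. unfold Rdiv. ring.
  + rewrite HL, s0_K2. field; lra.
-
  intros l [Hrec [H0 [Hsum HlK]]] j Hj.
  assert (Hs1 : 0 < s0 w K 1) by (apply s0_pos; lra || lia).
  assert (HF2 : 0 < Fh w 2).
  { rewrite Fh_eq. apply Rmult_lt_0_compat; [lra|].
    apply Rmult_lt_0_compat; apply sin_gt_0; simpl INR; lra. }
  set (t := l 1%nat / s0 w K 1).
  set (c := (l 2%nat - t * s0 w K 2) / Fh w 2).
  assert (Heq : forall j, (j <= K+2)%nat -> l j = (fun i => t * s0 w K i + c * Fh w i) j).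
  { apply (uniq3 a K).
    - lra.
    - intros i Hi. rewrite <- (dcoef_mid a K) by lia. apply Hrec; lia.
    - intros i Hi. rewrite rec_lin, s0_rec, F_rec by (lra || lia). ring.
    - rewrite H0, s0_0, Fh0. ring.
    - rewrite Fh1. unfold t. field. lra.
    - unfold c. field. lra. }
  assert (Hc0 : c = 0).
  { pose proof (Heq (K+2)%nat ltac:(lia)) as E. simpl in E. rewrite HlK, s0_K2 in E.
    replace (K+2)%nat with (S (K+1)) in E by lia.
    rewrite Fh_eq in E.
    assert (0 < sin (INR (K+1) * w / 2)).
    { assert (0 < INR (K+1)) by (rewrite plus_INR; simpl; pose proof (pos_INR K); lra).
      apply sin_gt_0; nra. }
    replace (S (K+1)) with (K+2)%nat in E by lia.
    assert (Hp : sin (INR (K + 2) * w / 2) * sin (INR (K + 1) * w / 2) <> 0).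
    { apply Rmult_integral_contrapositive. split; lra. }
    apply (Rmult_eq_reg_r (2 * (sin (INR (K + 2) * w / 2) * sin (INR (K + 1) * w / 2)))).
    lra. intro Hq. apply Hp. lra. }
  assert (Ht : t * Zc w K = 1).
  { rewrite <- Hsum, HZe, scal_sum. apply sum_eq. intros i Hi.
    rewrite (Heq (S i)) by lia. rewrite Hc0. ring. }
  rewrite (Heq j Hj), Hc0, HL.
  replace t with (/ Zc w K). field. lra.
  apply (Rmult_eq_reg_r (Zc w K)). rewrite Ht, Rinv_l; lra. lra.
- rewrite Hd0, dcoef_SK, !HL, Hsym2, Hsym1, HK2. field. lra.
- rewrite Hd0. f_equal.
  pose proof (cosrec (INR (K+2) * w / 2) w a 0 Hrel) as R.
  rewrite !s0_cos.
  replace (INR (K + 3) / 2 * w) with (INR (K+2) * w / 2 + w / 2) by (rewrite !plus_INR; change (INR 3) with (1+1+1); change (INR 2) with (1+1); field).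
  pose proof (prod_sin (INR (K+2) * w / 2 + w / 2) (w/2)) as P.
  replace (INR (K + 2) * w / 2 + w / 2 - w / 2) with (INR (K + 2) * w / 2 - 0 * w) in P by ring.
  replace (INR (K + 2) * w / 2 + w / 2 + w / 2) with (INR (K + 2) * w / 2 - (0 - 1) * w) in P by lra.
  change (INR 1) with 1. change (INR 2) with (1+1).
  replace (INR (K + 2) * w / 2 - 1 * w) with (INR (K + 2) * w / 2 - (0 + 1) * w) by ring.
  replace (INR (K + 2) * w / 2 - (1+1) * w) with (INR (K + 2) * w / 2 - (0 + 2) * w) by ring.
  replace (cos (INR (K + 2) * w / 2)) with (cos (INR (K + 2) * w / 2 - 0 * w)) by (f_equal; ring).
  assert (P' : sin (INR (K + 2) * w / 2 + w / 2) * sin (w / 2) =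
     (cos (INR (K + 2) * w / 2 - 0 * w) - cos (INR (K + 2) * w / 2 - (0 - 1) * w)) / 2) by lra.
  rewrite P'. lra.
- intros j Hj. rewrite HL. apply Rdiv_lt_0_compat; [apply s0_pos; lra || lia | lra].
- exact HZ.
Qed.

Lemma cos_lt_from x y : 0 <= x <= PI -> 0 <= y <= PI -> cos x < cos y -> y < x.
Proof. intros Hx Hy H. destruct (Rlt_le_dec y x) as [h|h]; auto.
 destruct (Rle_lt_or_eq_dec x y h) as [h'|h'].
 - pose proof (cos_decreasing_1 x y ltac:(lra) ltac:(lra) ltac:(lra) ltac:(lra) h'). lra.
 - subst. lra. Qed.

Lemma angle_facts (m : R) : 4 <= m -> 0 < 2 * PI / m /\ 2 * PI / m <= PI / 2 /\ 2 * PI / m * m = 2 * PI.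
Proof. intro Hm. pose proof PI_RGT_0.
 assert (E : 2 * PI / m * m = 2 * PI) by (field; lra).
 split; [|split]; [apply Rdiv_lt_0_compat; lra | | exact E].
 nra. Qed.

Lemma cos2PI3 : cos (2 * PI / 3) = - (1/2).
Proof. replace (2 * PI / 3) with (PI - PI / 3) by field.
 rewrite cos_minus, cos_PI, sin_PI, cos_PI3. ring. Qed.

Lemma band_w (L : nat) (a w : R) : (1 <= L)%nat -> alpha_band L a ->
  0 < w < PI -> cos w = (1 - a) / (2 * a) ->
  0 < a /\ 2 * PI < w * (INR L + 3) /\ w * (INR L + 2) < 2 * PI.
Proof.
intros HL [Hlo Hhi] Hw Hc. pose proof PI_RGT_0.
assert (Hn : 1 <= INR L) by (apply (le_INR 1); lia).
unfold alphaL in Hlo.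
replace (INR (S L + 2)) with (INR L + 3) in Hlo by (rewrite plus_INR, S_INR; simpl; ring).
destruct (angle_facts (INR L + 3) ltac:(lra)) as [T1 [T2 T3]].
set (t := 2 * PI / (INR L + 3)) in *.
assert (C0 : 0 <= cos t) by (apply cos_ge_0; lra).
assert (Hlo' : a * (1 + 2 * cos t) > 1).
{ apply (Rmult_lt_compat_r (1 + 2 * cos t)) in Hlo; [|lra].
  unfold Rdiv in Hlo. rewrite Rmult_1_l, Rinv_l in Hlo; lra. }
assert (Ha : 0 < a) by nra.
assert (Hrel : 2 * a * cos w = 1 - a) by (rewrite Hc; field; lra).
assert (Hcw : cos w < cos t) by nra.
assert (Htw : t < w) by (apply cos_lt_from; lra).
split; [exact Ha| split]. nra.
destruct (Compare_dec.le_lt_dec 2 L) as [h|h].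
- specialize (Hhi h). unfold alphaL in Hhi.
  replace (INR (L + 2)) with (INR L + 2) in Hhi by (rewrite plus_INR; simpl; ring).
  destruct (angle_facts (INR L + 2) ltac:(assert (2 <= INR L) by (apply (le_INR 2); lia); lra)) as [U1 [U2 U3]].
  set (u := 2 * PI / (INR L + 2)) in *.
  assert (C1 : 0 <= cos u) by (apply cos_ge_0; lra).
  assert (Hhi' : a * (1 + 2 * cos u) < 1).
  { apply (Rmult_lt_compat_r (1 + 2 * cos u)) in Hhi; [|lra].
    unfold Rdiv in Hhi. rewrite Rmult_1_l, Rinv_l in Hhi; lra. }
  assert (cos u < cos w) by nra.
  assert (w < u) by (apply cos_lt_from; lra).
  nra.
- assert (L = 1%nat) by lia. subst L. simpl INR.
  assert (cos (2 * PI / 3) < cos w) by (rewrite cos2PI3; nra).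
  assert (0 < 2 * PI / 3) by (apply Rdiv_lt_0_compat; lra).
  assert (w < 2 * PI / 3) by (apply cos_lt_from; lra).
  lra.
Qed.

Theorem mainTheorem8 :
  (forall (L K : nat) (a w : R),
     (1 <= L)%nat -> alpha_band L a -> (K <= L + 1)%nat ->
     0 < w < PI -> cos w = (1 - a) / (2 * a) ->
     system_EK0 a K (lsol w K) /\
     (forall l : nat -> R, system_EK0 a K l ->
        forall j : nat, (j <= K + 2)%nat -> l j = lsol w K j) /\
     dcoef a K (lsol w K) 0 = - dcoef a K (lsol w K) (S K) /\
     dcoef a K (lsol w K) 0 =
       - a * (sin (INR (K + 3) / 2 * w) * sin (w / 2)) / Zc w K /\
     (forall j : nat, (1 <= j <= K + 1)%nat -> 0 < lsol w K j) /\
     ((K <= L - 1)%nat -> dcoef a K (lsol w K) 0 < 0) /\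
     ((L <= K)%nat -> 0 < dcoef a K (lsol w K) 0))
  /\
  (forall (L K : nat) (a w : R),
     (1 <= L)%nat -> a = alphaL L -> (1 <= K <= L - 1)%nat ->
     0 < w < PI -> cos w = (1 - a) / (2 * a) ->
     system_EK0 a K (lsol w K) /\
     (forall l : nat -> R, system_EK0 a K l ->
        forall j : nat, (j <= K + 2)%nat -> l j = lsol w K j) /\
     dcoef a K (lsol w K) 0 = - dcoef a K (lsol w K) (S K) /\
     dcoef a K (lsol w K) 0 =
       - a * (sin (INR (K + 3) / 2 * w) * sin (w / 2)) / Zc w K).
Proof.
pose proof PI_RGT_0 as HPI.
split.
- intros L K a w HL Hb HK Hw Hc.
  destruct (band_w L a w HL Hb Hw Hc) as [Ha [Hlo Hhi]].
  assert (Hn : 1 <= INR L) by (apply (le_INR 1); lia).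
  assert (Hk0 : 0 <= INR K) by apply pos_INR.
  assert (Hk : INR K <= INR L + 1) by (rewrite <- (S_INR L); replace (S L) with (L+1)%nat by lia; apply le_INR; lia).
  assert (H1 : INR (K + 1) * w < 2 * PI) by (rewrite plus_INR; simpl; nra).
  assert (H2 : sin (INR (K + 2) * w / 2) <> 0).
  { rewrite plus_INR. change (INR 2) with (1+1).
    destruct (Compare_dec.le_lt_dec K L) as [h|h].
    - assert (INR K <= INR L) by (apply le_INR; lia).
      apply Rgt_not_eq, sin_gt_0; nra.
    - assert (K = S L) by lia. subst K. rewrite S_INR.
      apply Rlt_not_eq, sin_lt_0; nra. }
  destruct (core K a w Ha Hc Hw H1 H2) as [A1 [A2 [A3 [A4 [A5 HZ]]]]].
  assert (Hs2 : 0 < sin (w / 2)) by (apply sin_gt_0; lra).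
  split; [exact A1|split; [exact A2|split; [exact A3|split; [exact A4|split; [exact A5|split]]]]].
  + intro h. rewrite A4.
    assert (INR K + 1 <= INR L) by (rewrite <- S_INR; apply le_INR; lia).
    assert (0 < sin (INR (K + 3) / 2 * w)).
    { rewrite plus_INR. change (INR 3) with (1+1+1). apply sin_gt_0; nra. }
    replace (- a * (sin (INR (K + 3) / 2 * w) * sin (w / 2)) / Zc w K)
      with (- (a * (sin (INR (K + 3) / 2 * w) * sin (w / 2)) / Zc w K)) by (unfold Rdiv; ring).
    assert (0 < a * (sin (INR (K + 3) / 2 * w) * sin (w / 2)) / Zc w K).
    { apply Rdiv_lt_0_compat; [apply Rmult_lt_0_compat; [lra|apply Rmult_lt_0_compat]|]; lra. }
    lra.
  + intro h. rewrite A4.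
    assert (INR L <= INR K) by (apply le_INR; lia).
    assert (sin (INR (K + 3) / 2 * w) < 0).
    { rewrite plus_INR. change (INR 3) with (1+1+1). apply sin_lt_0; nra. }
    replace (- a * (sin (INR (K + 3) / 2 * w) * sin (w / 2)) / Zc w K)
      with (a * (- sin (INR (K + 3) / 2 * w) * sin (w / 2)) / Zc w K) by (unfold Rdiv; ring).
    apply Rdiv_lt_0_compat; [apply Rmult_lt_0_compat; [lra|apply Rmult_lt_0_compat]|]; lra.
- intros L K a w HL Ha HK Hw Hc.
  assert (Hn : 2 <= INR L) by (apply (le_INR 2); lia).
  unfold alphaL in Ha.
  replace (INR (L + 2)) with (INR L + 2) in Ha by (rewrite plus_INR; simpl; ring).
  destruct (angle_facts (INR L + 2) ltac:(lra)) as [U1 [U2 U3]].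
  set (u := 2 * PI / (INR L + 2)) in *.
  assert (C1 : 0 <= cos u) by (apply cos_ge_0; lra).
  assert (Hapos : 0 < a) by (rewrite Ha; apply Rdiv_lt_0_compat; lra).
  assert (Hcw : cos w = cos u) by (rewrite Hc, Ha; field; lra).
  assert (Hwu : w <= u).
  { destruct (Rle_lt_dec w u) as [h|h]; auto.
    pose proof (cos_decreasing_1 u w ltac:(lra) ltac:(lra) ltac:(lra) ltac:(lra) h). lra. }
  assert (Hk : INR K + 1 <= INR L) by (rewrite <- S_INR; apply le_INR; lia).
  assert (Hk0 : 0 <= INR K) by apply pos_INR.
  assert (H1 : INR (K + 1) * w < 2 * PI) by (rewrite plus_INR; simpl; nra).
  assert (H2 : sin (INR (K + 2) * w / 2) <> 0).
  { rewrite plus_INR. change (INR 2) with (1+1).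
    apply Rgt_not_eq, sin_gt_0; nra. }
  destruct (core K a w Hapos Hc Hw H1 H2) as [A1 [A2 [A3 [A4 [A5 HZ]]]]].
  auto.
Qed.
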